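(* Let $T=(V,E)$ be a rooted phylogenetic tree on a finite set $\mathcal{X}$ of taxa, let $\mathcal{G}$ be a finite set of genes, let $G:\mathcal{X}\to 2^{\mathcal{G}}$ be a genome assignment, and let $k$ be a positive integer. Then: (i) $\ell(T,G,k)\ge \sqrt{\tfrac{2}{3}\,|\{v\in V : n(v)>k\}|}$; (ii) $\ell(T,G,k)\le \left\lceil \frac{|\mathcal{G}|-k}{k}\right\rceil\cdot(|\mathcal{X}|+1)$.
   Context: A digraph is rooted if it has a vertex $\rho$ of indegree zero such that every vertex is reachable from $\rho$ by a directed path. A phylogenetic tree on $\mathcal{X}$ is a rooted tree (arcs directed away from the root) whose root has degree at least two, all other internal vertices have degree at least three, and whose leaf set is $\mathcal{X}$. A phylogenetic network on $\mathcal{X}$ is a rooted acyclic digraph whose root has outdegree at least two, in which every vertex $v$ of outdegree $1$ has indegree at least $2$, and whose set of outdegree-zero vertices (leaves) is $\mathcal{X}$. A genome assignment is any map $G:\mathcal{X}\to 2^{\mathcal{G}}$. For a phylogenetic network $N=(V,A)$ on $\mathcal{X}$ and positive integer $k$, a $(G,k)$-gene labelling of $N$ is a map $F:V\to 2^{\mathcal{G}}$ such that (I) $F(x)=G(x)$ for all $x\in\mathcal{X}$; (II) $|F(v)|\le k$ for all $v\in V$; (III) for each $g\in\mathcal{G}$, the sub-digraph of $N$ induced by $\{v\in V: g\in F(v)\}$ is rooted. A network $N$ is obtained from $T$ by adding $h$ arcs if $N$ has a subgraph $T'$ that is a subdivision of $T$ (obtained by replacing arcs by directed paths) and exactly $h$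 arcs of $N$ are not arcs of $T'$. $\ell(T,G,k)$ denotes the minimum $h$ such that some phylogenetic network obtained from $T$ by adding $h$ arcs admits a $(G,k)$-gene labelling. For a vertex $v$ of $T$, $n(v)$ is the number of genes $g\in\mathcal{G}$ for which there exist leaves $x_1,x_2\in\mathcal{X}$ with $g\in G(x_1)\cap G(x_2)$ and whose most recent common ancestor in $T$ is $v$. *)

(* Defs.v *)
From mathcomp Require Import all_boot.
Set Implicit Arguments. Unset Strict Implicit. Unset Printing Implicit Defensive.

(* Finite simple digraphs are given by a vertex finType V and an arc relation
   e : rel V (arc u -> w iff e u w). *)

Definition outdeg (V : finType) (e : rel V) (v : V) : nat := #|[set w | e v w]|.
Definition indeg (V : finType) (e : rel V) (v : V) : nat := #|[set u | e u v]|.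

Definition induced (V : finType) (e : rel V) (S : {set V}) : rel V :=
  [rel u w | [&& e u w, u \in S & w \in S]].

Definition rooted_on (V : finType) (e : rel V) (S : {set V}) : Prop :=
  exists2 rho, rho \in S &
    (indeg (induced e S) rho = 0 /\ forall v, v \in S -> connect (induced e S) rho v).

Definition is_root (V : finType) (e : rel V) (rho : V) : Prop :=
  indeg e rho = 0 /\ forall v, connect e rho v.

Definition acyclic (V : finType) (e : rel V) : Prop :=
  forall u w, e u w -> ~~ connect e w u.

(* Rooted tree (arcs directed away from the root rho), i.e. every non-root
   vertex has exactly one parent, root degree >= 2, non-root internal vertices
   degree >= 3, and leaf set (outdegree-0 vertices) bijectively labelled by X
   via lT. *)
Definition phylo_tree (X VT : finType) (eT : rel VT) (lT : X -> VT) : Prop :=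
  exists rho, [/\ is_root eT rho,
    forall v, v != rho -> indeg eT v = 1,
    2 <= indeg eT rho + outdeg eT rho,
    forall v, v != rho -> 0 < outdeg eT v -> 3 <= indeg eT v + outdeg eT v &
    injective lT /\
    forall v, (outdeg eT v == 0) = (v \in codom lT)].

Definition phylo_network (X VN : finType) (eN : rel VN) (lN : X -> VN) : Prop :=
  [/\ (exists2 rho, is_root eN rho & 2 <= outdeg eN rho),
    acyclic eN,
    forall v, outdeg eN v = 1 -> 2 <= indeg eN v &
    injective lN /\
    forall v, (outdeg eN v == 0) = (v \in codom lN)].

(* arcs (as pairs) of the directed path a :: p ++ [:: b] *)
Definition path_arcs (V : Type) (a : V) (p : seq V) (b : V) : seq (V * V) :=
  zip (a :: p) (rcons p b).

(* N = (VN,eN,lN) is obtained from T = (VT,eT,lT) by adding h arcs: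
   N has a subgraph T' (arc set A') which is a subdivision of T, i.e. there
   is an injective vertex embedding phi : VT -> VN respecting leaf labels, and
   each arc (u,w) of T is replaced by a directed path
   phi u, sub u w, phi w of N using arcs of A' only, where the internal vertices
   (sub u w) are pairwise distinct, are not images of phi, and are not shared
   between the paths of different arcs; A' consists exactly of the arcs of
   these paths; and exactly h arcs of N are not arcs of T'. *)
Definition obtained_by_adding (X VT VN : finType) (eT : rel VT) (lT : X -> VT)
    (eN : rel VN) (lN : X -> VN) (h : nat) : Prop :=
  exists (A' : {set VN * VN}) (phi : VT -> VN) (sub : VT -> VT -> seq VN),
  [/\ injective phi /\ (forall x, phi (lT x) = lN x),
      forall a, a \in A' -> eN a.1 a.2,
      forall u w, eT u w ->
        [/\ all (fun a => a \in A') (path_arcs (phi u) (sub u w) (phi w)),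
            uniq (sub u w) &
            forall z, z \in sub u w -> z \notin codom phi],
      forall u w u' w', eT u w -> eT u' w' -> (u, w) != (u', w') ->
        forall z, z \in sub u w -> z \notin sub u' w' &
      (forall a, a \in A' -> exists u w, eT u w /\ a \in path_arcs (phi u) (sub u w) (phi w)) /\
      #|[set a : VN * VN | eN a.1 a.2 & a \notin A']| = h].

Definition gene_labelling (X VN Gn : finType) (eN : rel VN) (lN : X -> VN)
    (G : X -> {set Gn}) (k : nat) (F : VN -> {set Gn}) : Prop :=
  [/\ forall x, F (lN x) = G x,
      forall v, #|F v| <= k &
      forall g, rooted_on eN [set v | g \in F v]].

(* h is attainable: some phylogenetic network obtained from T by adding h arcs
   admits a (G,k)-gene labelling.  ell(T,G,k) is the minimum such h. *)
Definition ell_attainable (X VT Gn : finType) (eT : rel VT) (lT : X -> VT)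
    (G : X -> {set Gn}) (k h : nat) : Prop :=
  exists (VN : finType) (eN : rel VN) (lN : X -> VN),
    [/\ phylo_network eN lN, obtained_by_adding eT lT eN lN h &
        exists F : VN -> {set Gn}, gene_labelling eN lN G k F].

Definition is_mrca (VT : finType) (eT : rel VT) (v a b : VT) : bool :=
  [&& connect eT v a, connect eT v b &
      [forall w, (connect eT w a && connect eT w b) ==> connect eT w v]].

Definition n_of (X VT Gn : finType) (eT : rel VT) (lT : X -> VT)
    (G : X -> {set Gn}) (v : VT) : nat :=
  #|[set g : Gn | [exists x1, exists x2,
       [&& x1 != x2, g \in G x1, g \in G x2 & is_mrca eT v (lT x1) (lT x2)]]]|.

Definition ceil_div (a b : nat) : nat := (a + b.-1) %/ b.

(* Main.v *)
Require Import Defs.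
From mathcomp Require Import all_boot.
Set Implicit Arguments. Unset Strict Implicit. Unset Printing Implicit Defensive.

Lemma last_step (T : finType) (e : rel T) a p :
  connect e a p -> a != p -> exists2 q, connect e a q & e q p.
Proof.
move=> /connectP [s Hs ->]; elim/last_ind: s Hs => [|s z _] /=; first by rewrite eqxx.
rewrite rcons_path last_rcons => /andP [Hs Hz] _.
by exists (last a s) => //; apply/connectP; exists s.
Qed.

Lemma first_step (T : finType) (e : rel T) a p :
  connect e a p -> a != p -> exists2 c, e a c & connect e c p.
Proof.
move=> /connectP [[|c s] Hs ->] /=; first by rewrite eqxx.
move: Hs => /= /andP [Hc Hs] _; exists c => //; apply/connectP; by exists s.
Qed.

Lemma back_closed (T : finType) (e : rel T) (P : pred T) a b :
  (forall p y, e p y -> P y -> P p) -> connect e a b -> P b -> P a.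
Proof.
move=> Hcl /connectP [s Hs ->]; elim: s a Hs => [|y s IH] a //= /andP [Hy Hs] Hl.
exact: Hcl Hy (IH _ Hs Hl).
Qed.

Lemma crossing (T : finType) (r : rel T) (P : pred T) a b :
  connect r a b -> P b -> ~~ P a ->
  exists a', exists b', [/\ r a' b', ~~ P a', P b' & connect r a a'].
Proof.
move=> /connectP [s Hs ->]; elim: s a Hs => [|y s IH] a /=; first by move=> _ ->.
move=> /andP [Hy Hs] Hl Ha.
case Py: (P y); first by exists a, y; split.
have [a' [b' [H1 H2 H3 H4]]] := IH y Hs Hl (negbT Py).
exists a', b'; split => //; exact: connect_trans (connect1 Hy) H4.
Qed.

Lemma exiting (T : finType) (r : rel T) (P : pred T) a b :
  connect r a b -> P a -> ~~ P b ->
  exists a', exists b', [/\ r a' b', P a' & ~~ P b'].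
Proof.
move=> Hc Pa Pb.
have Pa' : ~~ (predC P) a by rewrite /= negbK.
have [a' [b' [H1 H2 H3 _]]] := @crossing T r (predC P) a b Hc Pb Pa'.
by exists a', b'; split => //; move: H2; rewrite /= negbK.
Qed.

Definition treeish (VT : finType) (eT : rel VT) (rho : VT) : Prop :=
  [/\ indeg eT rho = 0, forall v, connect eT rho v &
      forall v, v != rho -> indeg eT v = 1].


Lemma no_into_root (VT : finType) (eT : rel VT) rho :
  treeish eT rho -> forall u, ~~ eT u rho.
Proof.
case=> H0 _ _ u; apply/negP => Hu.
have : u \in [set u | eT u rho] by rewrite inE.
by move: H0; rewrite /indeg => /eqP; rewrite cards_eq0 => /eqP ->; rewrite inE.
Qed.

Lemma par_uniq (VT : finType) (eT : rel VT) rho :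
  treeish eT rho -> forall u u' w, eT u w -> eT u' w -> u = u'.
Proof.
move=> HT u u' w Hu Hu'.
have Hw : w != rho by apply/eqP => Ew; move: Hu; rewrite Ew (negbTE (no_into_root HT u)).
case: HT => _ _ H1; have := H1 w Hw; rewrite /indeg => Hc.
have : #|[set u | eT u w]| <= 1 by rewrite Hc.
move/card_le1_eqP => Hall.
by apply: Hall; rewrite inE.
Qed.

Lemma parent_conn (VT : finType) (eT : rel VT) rho :
  treeish eT rho -> forall a p q, connect eT a p -> a != p -> eT q p -> connect eT a q.
Proof.
move=> HT a p q Hc Hne Hq.
have [q' Hq' Hq'p] := last_step Hc Hne.
by rewrite (par_uniq HT Hq Hq'p).
Qed.

Lemma tree_acyclic (VT : finType) (eT : rel VT) rho :
  treeish eT rho -> acyclic eT.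
Proof.
move=> HT u w Huw; apply/negP => Hwu.
pose D := fun x => connect eT w x.
have Hcl : forall p y, eT p y -> D y -> D p.
  move=> p y Hp; rewrite /D => Hy; case: (eqVneq w y) => [Ey|Ney].
    by rewrite -Ey in Hp; rewrite (par_uniq HT Hp Huw).
  exact: (parent_conn HT Hy Ney Hp).
have Hr : D rho.
  case: HT => _ Hrv _; apply: (back_closed Hcl (Hrv w)); exact: connect0.
have Hne : w != rho by apply/eqP => Ew; move: Huw; rewrite Ew (negbTE (no_into_root HT u)).
have [q _ Hq] := last_step Hr Hne.
by move: Hq; rewrite (negbTE (no_into_root HT q)).
Qed.

Lemma tcomparable (VT : finType) (eT : rel VT) rho :
  treeish eT rho -> forall a b p, connect eT a p -> connect eT b p ->
  connect eT a b || connect eT b a.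
Proof.
move=> HT a b p Hap /connectP [s Hs Ep]; subst p.
elim/last_ind: s Hap Hs => [|s z IH] /=; first by move=> ->.
rewrite last_rcons rcons_path => Haz /andP [Hs Hz].
case: (eqVneq a z) => [Ea|Nea].
  by rewrite Ea; apply/orP; right; apply/connectP; exists (rcons s z); rewrite ?rcons_path ?Hs ?Hz ?last_rcons.
apply: IH => //; exact: (parent_conn HT Haz Nea Hz).
Qed.

Lemma child_eq (VT : finType) (eT : rel VT) rho :
  treeish eT rho -> forall v c d, eT v c -> eT v d -> connect eT c d -> c = d.
Proof.
move=> HT v c d Hc Hd Hcd; apply/eqP; apply/negP => /negP Ne.
have Hcv := parent_conn HT Hcd Ne Hd.
by move: (tree_acyclic HT Hc); rewrite Hcv.
Qed.

Lemma U_half (VT : finType) (eT : rel VT) rho :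
  treeish eT rho -> forall v d1 d2 w1 w2 v' d1' d2',
  eT v d1 -> eT v d2 -> d1 != d2 -> connect eT d1 w1 -> connect eT d2 w2 ->
  eT v' d1' -> eT v' d2' -> connect eT d1' w1 -> connect eT d2' w2 ->
  connect eT v v' -> v = v'.
Proof.
move=> HT v d1 d2 w1 w2 v' d1' d2' H1 H2 N12 C1 C2 H1' H2' C1' C2' Cvv.
apply/eqP; apply/negP => /negP Ne.
have [c Hc Ccv] := first_step Cvv Ne.
have Cc1 : connect eT c w1 := connect_trans Ccv (connect_trans (connect1 H1') C1').
have Cc2 : connect eT c w2 := connect_trans Ccv (connect_trans (connect1 H2') C2').
have E1 : c = d1.
  case/orP: (tcomparable HT Cc1 C1) => Hcd; first exact: (child_eq HT Hc H1 Hcd).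
  by apply/esym; apply: (child_eq HT H1 Hc Hcd).
have E2 : c = d2.
  case/orP: (tcomparable HT Cc2 C2) => Hcd; first exact: (child_eq HT Hc H2 Hcd).
  by apply/esym; apply: (child_eq HT H2 Hc Hcd).
by move: N12; rewrite -E1 -E2 eqxx.
Qed.

Lemma U_T (VT : finType) (eT : rel VT) rho :
  treeish eT rho -> forall v d1 d2 w1 w2 v' d1' d2',
  eT v d1 -> eT v d2 -> d1 != d2 -> connect eT d1 w1 -> connect eT d2 w2 ->
  eT v' d1' -> eT v' d2' -> d1' != d2' -> connect eT d1' w1 -> connect eT d2' w2 ->
  v = v'.
Proof.
move=> HT v d1 d2 w1 w2 v' d1' d2' H1 H2 N12 C1 C2 H1' H2' N12' C1' C2'.
have Cv : connect eT v w1 := connect_trans (connect1 H1) C1.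
have Cv' : connect eT v' w1 := connect_trans (connect1 H1') C1'.
case/orP: (tcomparable HT Cv Cv') => C.
  exact: (U_half HT H1 H2 N12 C1 C2 H1' H2' C1' C2' C).
by apply/esym; apply: (U_half HT H1' H2' N12' C1' C2' H1 H2 C1 C2 C).
Qed.

Lemma mem_zip2 (S T : eqType) (s : seq S) (t : seq T) a b :
  (a, b) \in zip s t -> a \in s /\ b \in t.
Proof.
elim: s t => [|x s IH] [|y t] //=; rewrite in_cons => /orP [/eqP [-> ->]|/IH [H1 H2]].
  by rewrite !inE !eqxx.
by rewrite !inE H1 H2 !orbT.
Qed.

Lemma outdeg_pos (V : finType) (e : rel V) v w : e v w -> 0 < outdeg e v.
Proof. by move=> H; rewrite /outdeg card_gt0; apply/set0Pn; exists w; rewrite inE. Qed.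

Lemma leaf_reach (X VT : finType) (eT : rel VT) (lT : X -> VT) :
  (forall v, (outdeg eT v == 0) = (v \in codom lT)) ->
  forall v y, v \in codom lT -> connect eT v y -> v = y.
Proof.
move=> Hl v y Hv Hc; apply/eqP; apply/negP => /negP Ne.
have [c Hc' _] := first_step Hc Ne.
by move: Hv (outdeg_pos Hc'); rewrite -Hl => /eqP ->.
Qed.

Lemma mrca_children (X VT : finType) (eT : rel VT) (lT : X -> VT) rho :
  treeish eT rho -> (forall v, (outdeg eT v == 0) = (v \in codom lT)) -> injective lT ->
  forall v x1 x2, x1 != x2 -> is_mrca eT v (lT x1) (lT x2) ->
  exists c1, exists c2, [/\ eT v c1, eT v c2, c1 != c2, connect eT c1 (lT x1) & connect eT c2 (lT x2)].
Proof.
move=> HT Hl Hinj v x1 x2 Nx /and3P [C1 C2 /forallP Hall].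
have Hne : forall x x', x != x' -> connect eT v (lT x) -> connect eT v (lT x') -> v != lT x.
  move=> x x' Nxx Cx Cx'; apply/eqP => Ev.
  have := leaf_reach Hl (codom_f lT x) (etrans (esym (congr1 (connect eT ^~ (lT x')) Ev)) Cx').
  by move/Hinj => E; move: Nxx; rewrite E eqxx.
have [c1 H1 D1] := first_step C1 (Hne _ _ Nx C1 C2).
have Nx' : x2 != x1 by rewrite eq_sym.
have [c2 H2 D2] := first_step C2 (Hne _ _ Nx' C2 C1).
exists c1, c2; split => //; apply/eqP => E; subst c2.
have := Hall c1; rewrite D1 D2 /= => Cc.
by move: (tree_acyclic HT H1); rewrite Cc.
Qed.


Lemma conn_map (T T' : finType) (e : rel T) (e' : rel T') (f : T -> T') :
  (forall a b, e a b -> e' (f a) (f b)) -> forall a b, connect e a b -> connect e' (f a) (f b).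
Proof.
move=> Hf a b /connectP [s Hs ->]; elim: s a Hs => [|y s IH] a /=; first by rewrite connect0.
by case/andP => Hy Hs; apply: connect_trans (connect1 (Hf _ _ Hy)) (IH _ Hs).
Qed.

Lemma rank_le (T : finType) (e : rel T) (r : T -> nat) :
  (forall u w, e u w -> r u < r w) -> forall a b, connect e a b -> r a <= r b.
Proof.
move=> Hr a b /connectP [s Hs ->]; elim: s a Hs => [|y s IH] a //=.
by case/andP => Hy Hs; apply: leq_trans (ltnW (Hr _ _ Hy)) (IH _ Hs).
Qed.

Lemma rank_acyclic (T : finType) (e : rel T) (r : T -> nat) :
  (forall u w, e u w -> r u < r w) -> acyclic e.
Proof.
move=> Hr u w Huw; apply/negP => C; have := rank_le Hr C.
by rewrite leqNgt Hr.
Qed.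

Definition anc (VT : finType) (eT : rel VT) (v : VT) := #|[set u | connect eT u v]|.

Lemma anc_lt (VT : finType) (eT : rel VT) a b :
  connect eT a b -> ~~ connect eT b a -> anc eT a < anc eT b.
Proof.
move=> Cab NCba; apply: proper_card; apply/properP; split.
  by apply/subsetP => u; rewrite !inE => Cua; apply: connect_trans Cua Cab.
by exists b; rewrite !inE ?connect0.
Qed.

Lemma leaf_below (X VT : finType) (eT : rel VT) (lT : X -> VT) rho :
  treeish eT rho -> (forall v, (outdeg eT v == 0) = (v \in codom lT)) ->
  forall c, exists x, connect eT c (lT x).
Proof.
move=> HT Hl c.
have Pc : connect eT c c by exact: connect0.
case: (arg_maxnP (anc eT) Pc) => w Cw Hmax.
have : w \in codom lT.
  rewrite -Hl cards_eq0; apply/eqP; apply/setP => w'; rewrite !inE; apply/negP => Hw'.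
  have := Hmax w' (connect_trans Cw (connect1 Hw')).
  by rewrite /= leqNgt (anc_lt (connect1 Hw') (tree_acyclic HT Hw')).
by case/codomP => x Ex; exists x; rewrite -Ex.
Qed.

Lemma two_leaves (X VT : finType) (eT : rel VT) (lT : X -> VT) rho :
  treeish eT rho -> (forall v, (outdeg eT v == 0) = (v \in codom lT)) ->
  2 <= outdeg eT rho -> exists x1 : X, exists x2 : X, x1 != x2.
Proof.
move=> HT Hl; rewrite /outdeg => /card_gt1P [c1 [c2 [H1 H2 N]]].
rewrite inE in H1; rewrite inE in H2.
have [x1 C1] := leaf_below HT Hl c1; have [x2 C2] := leaf_below HT Hl c2.
exists x1, x2; apply/negP => /eqP E; subst x2.
case/orP: (tcomparable HT C1 C2) => C.
  by move: N; rewrite (child_eq HT H1 H2 C) eqxx.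
by move: N; rewrite (child_eq HT H2 H1 C) eqxx.
Qed.


Lemma part_i (X Gn VT : finType) (eT : rel VT) (lT : X -> VT) (G : X -> {set Gn}) (k : nat) rho :
  treeish eT rho -> (forall v, (outdeg eT v == 0) = (v \in codom lT)) -> injective lT ->
  forall h, ell_attainable eT lT G k h ->
  2 * #|[set v : VT | k < n_of eT lT G v]| <= 3 * h ^ 2.
Proof.
move=> HT Hl Hinj h [VN [eN [lN [_ HA [F [Flab Fcard Froot]]]]]].
case: HA => A' [phi [sub [[phiinj philab] HA'arc Hpath Hdisj [Hcover Hcard]]]].
pose Q := fun z w => (z == phi w) || [exists u, eT u w && (z \in sub u w)].
have QU : forall z w w', Q z w -> Q z w' -> w = w'.
  move=> z w w' /orP [/eqP Ez | /existsP [u /andP [Hu Hz]]] /orP [/eqP Ez' | /existsP [u' /andP [Hu' Hz']]].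
  - by apply: phiinj; rewrite -Ez -Ez'.
  - by case: (Hpath u' w' Hu') => _ _ /(_ z Hz'); rewrite Ez codom_f.
  - by case: (Hpath u w Hu) => _ _ /(_ z Hz); rewrite Ez' codom_f.
  - case: (eqVneq (u, w) (u', w')) => [[_ ->] // | Ne].
    by move: (Hdisj u w u' w' Hu Hu' Ne z Hz); rewrite Hz'.
pose Reg := fun c z => [exists w, Q z w && connect eT c w].
have RegU : forall c z w, Reg c z -> Q z w -> connect eT c w.
  by move=> c z w /existsP [w0 /andP [Q0 C0]] Qw; rewrite -(QU _ _ _ Q0 Qw).
have Qphi : forall w, Q (phi w) w by move=> w; rewrite /Q eqxx.
have RegI : forall c z w, Q z w -> connect eT c w -> Reg c z.
  by move=> c z w Qz Cw; apply/existsP; exists w; rewrite Qz Cw.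
have decode : forall a, a \in A' -> exists u, exists w,
    [/\ eT u w, (a.1 == phi u) || Q a.1 w & Q a.2 w].
  move=> [a1 a2] Ha; have [u [w [Huw Hin]]] := Hcover _ Ha.
  move: Hin; rewrite /path_arcs => /mem_zip2 [H1 H2].
  exists u, w; split => //=.
  - move: H1; rewrite in_cons => /orP [-> //|Hs]; apply/orP; right; apply/orP; right.
    by apply/existsP; exists u; rewrite Huw Hs.
  - move: H2; rewrite mem_rcons in_cons => /orP [/eqP -> | Hs]; first exact: Qphi.
    by apply/orP; right; apply/existsP; exists u; rewrite Huw Hs.
have stay : forall c a, a \in A' -> Reg c a.1 -> Reg c a.2.
  move=> c a Ha R1; have [u [w [Huw H1 H2]]] := decode a Ha.
  apply: (RegI _ _ w H2).
  case/orP: H1 => [/eqP E1 | Q1].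
  - have Qu : Q a.1 u by rewrite E1; exact: Qphi.
    exact: (connect_trans (RegU _ _ u R1 Qu) (connect1 Huw)).
  - exact: (RegU _ _ w R1 Q1).
have enter : forall v c a, a \in A' -> eT v c -> Reg c a.2 -> ~~ Reg c a.1 -> a.1 = phi v.
  move=> v c a Ha Hvc R2 NR1; have [u [w [Huw H1 H2]]] := decode a Ha.
  have Cw := RegU _ _ _ R2 H2.
  case/orP: H1 => [/eqP E1 | Q1]; last by move: NR1; rewrite (RegI _ _ _ Q1 Cw).
  have Qu : Q a.1 u by rewrite E1; exact: Qphi.
  have NCu : ~~ connect eT c u.
    by apply/negP => Cu; move: NR1; rewrite (RegI _ _ u Qu Cu).
  case: (eqVneq c w) => [Ecw | Ncw]; last by move: NCu; rewrite (parent_conn HT Cw Ncw Huw).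
  by subst w; rewrite E1 (par_uniq HT Huw Hvc).
have disj : forall v c1 c2 z, eT v c1 -> eT v c2 -> c1 != c2 -> Reg c1 z -> Reg c2 z -> False.
  move=> v c1 c2 z H1 H2 N /existsP [w /andP [Qw C1]] R2.
  have C2 := RegU _ _ _ R2 Qw.
  case/orP: (tcomparable HT C1 C2) => C.
  - by move: N; rewrite (child_eq HT H1 H2 C) eqxx.
  - by move: N; rewrite (child_eq HT H2 H1 C) eqxx.
pose Add := [set a : VN * VN | eN a.1 a.2 & a \notin A'].
pose valid := fun v (c : ({set VN * VN} + (VN * VN) * (VN * VN))%type) =>
  match c with
  | inl B => [exists e1 : VN * VN, exists e2 : VN * VN,
         [&& e1 \in Add, e2 \in Add, e1 != e2, B == [set e1; e2] &
         [exists d1, exists d2, [&& eT v d1, eT v d2, d1 != d2, Reg d1 e1.2 & Reg d2 e2.2]]]]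
  | inr (e1, e2) => [&& e1 \in Add, e2 \in Add &
         [exists d1, exists d2, [&& eT v d1, eT v d2, d1 != d2, Reg d1 e1.1 & Reg d2 e2.2]]]
  end.
have UR : forall v d1 d2 z1 z2 v' d1' d2', eT v d1 -> eT v d2 -> d1 != d2 -> Reg d1 z1 -> Reg d2 z2 ->
    eT v' d1' -> eT v' d2' -> d1' != d2' -> Reg d1' z1 -> Reg d2' z2 -> v = v'.
  move=> v d1 d2 z1 z2 v' d1' d2' H1 H2 N R1 R2 H1' H2' N' R1' R2'.
  case/existsP: R1 => w1 /andP [Q1 C1]; case/existsP: R2 => w2 /andP [Q2 C2].
  exact: (U_T HT H1 H2 N C1 C2 H1' H2' N' (RegU _ _ _ R1' Q1) (RegU _ _ _ R2' Q2)).
have valid_inj : forall v v' c, valid v c -> valid v' c -> v = v'.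
  move=> v v' [B|[e1 e2]] /=.
  - case/existsP => e1 /existsP [e2 /and5P [A1 A2 N12 /eqP EB /existsP [d1 /existsP [d2 /and5P [H1 H2 Nd R1 R2]]]]].
    case/existsP => e1' /existsP [e2' /and5P [_ _ N12' /eqP EB' /existsP [d1' /existsP [d2' /and5P [H1' H2' Nd' R1' R2']]]]].
    have He1 : e1' \in B by rewrite EB' !inE eqxx.
    have He2 : e2' \in B by rewrite EB' !inE eqxx orbT.
    move: He1 He2; rewrite EB !inE => /orP [/eqP E1 | /eqP E1] /orP [/eqP E2 | /eqP E2]; subst e1' e2'.
    + by move: N12'; rewrite eqxx.
    + exact: (UR v d1 d2 e1.2 e2.2 v' d1' d2').
    + have Nd'' : d2' != d1' by rewrite eq_sym.
      exact: (UR v d1 d2 e1.2 e2.2 v' d2' d1').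
    + by move: N12'; rewrite eqxx.
  - case/and3P => _ _ /existsP [d1 /existsP [d2 /and5P [H1 H2 Nd R1 R2]]].
    case/and3P => _ _ /existsP [d1' /existsP [d2' /and5P [H1' H2' Nd' R1' R2']]].
    exact: (UR v d1 d2 e1.1 e2.2 v' d1' d2').
have exist_code : forall v, k < n_of eT lT G v -> exists c, valid v c.
  move=> v; rewrite /n_of => Hn.
  have : ~~ ([set g : Gn | [exists x1, exists x2,
       [&& x1 != x2, g \in G x1, g \in G x2 & is_mrca eT v (lT x1) (lT x2)]]] \subset F (phi v)).
    apply/negP => Hs; have := leq_trans (subset_leq_card Hs) (Fcard _); by rewrite leqNgt Hn.
  case/subsetPn => g; rewrite inE => /existsP [x1 /existsP [x2 /and4P [Nx G1 G2 Hm]]] NgF.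
  have [c1 [c2 [H1 H2 N12 C1 C2]]] := mrca_children HT Hl Hinj Nx Hm.
  case: (Froot g) => rg Srg [_ Hreach].
  pose S := [set v0 | g \in F v0].
  pose Rg := induced eN S.
  have Sx : forall x, g \in G x -> lN x \in S by move=> x Gx; rewrite inE Flab.
  have Nphiv : phi v \notin S by rewrite inE.
  have Rx : forall c x, connect eT c (lT x) -> Reg c (lN x).
    move=> c x Cx; apply: (RegI _ _ (lT x)) => //; rewrite -philab; exact: Qphi.
  have RgE : forall a b, Rg a b -> [/\ eN a b, a \in S & b \in S] by move=> a b /and3P.
  have entA : forall c a b, eT v c -> Rg a b -> Reg c b -> ~~ Reg c a -> (a, b) \in Add.
    move=> c a b Hc Hab Rb NRa; case: (RgE a b Hab) => Eab Sa _.
    rewrite inE Eab /=; apply/negP => HA.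
    have Ea := enter v c (a, b) HA Hc Rb NRa; move: Sa; by rewrite /= in Ea; rewrite Ea (negbTE Nphiv).
  have exA : forall c a b, Rg a b -> Reg c a -> ~~ Reg c b -> (a, b) \in Add.
    move=> c a b Hab Ra NRb; case: (RgE a b Hab) => Eab _ _.
    rewrite inE Eab /=; apply/negP => HA; by move: NRb; rewrite (stay c (a, b) HA Ra).
  have one : forall c c' x', eT v c -> eT v c' -> c != c' -> Reg c rg -> Reg c' (lN x') ->
      connect Rg rg (lN x') -> exists e, valid v (inr e).
    move=> c c' x' Hc Hc' Ncc Rr Rx' Cx'.
    have NRr : ~~ Reg c' rg by apply/negP => R'; exact: (disj v c c' rg Hc Hc' Ncc Rr R').
    have [a' [b' [Hab NRa Rb Cra]]] := crossing (P := Reg c') Cx' Rx' NRr.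
    have Ae2 := entA c' a' b' Hc' Hab Rb NRa.
    case Ra: (Reg c a').
    - exists ((a', b'), (a', b')); rewrite /= Ae2 /=; apply/existsP; exists c; apply/existsP; exists c'.
      by rewrite Hc Hc' Ncc Ra Rb.
    - have [a'' [b'' [Hab' Ra'' NRb'']]] := exiting (P := Reg c) Cra Rr (negbT Ra).
      have Ae1 := exA c a'' b'' Hab' Ra'' NRb''.
      exists ((a'', b''), (a', b')); rewrite /= Ae1 Ae2 /=; apply/existsP; exists c; apply/existsP; exists c'.
      by rewrite Hc Hc' Ncc Ra'' Rb.
  have Rx1 := Rx c1 x1 C1; have Rx2 := Rx c2 x2 C2.
  have Cx1 := Hreach _ (Sx x1 G1); have Cx2 := Hreach _ (Sx x2 G2).
  case R1: (Reg c1 rg).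
    by have [e He] := one c1 c2 x2 H1 H2 N12 R1 Rx2 Cx2; exists (inr e).
  case R2: (Reg c2 rg).
    have N21 : c2 != c1 by rewrite eq_sym.
    by have [e He] := one c2 c1 x1 H2 H1 N21 R2 Rx1 Cx1; exists (inr e).
  have [a1 [b1 [Hab1 NRa1 Rb1 _]]] := crossing (P := Reg c1) Cx1 Rx1 (negbT R1).
  have [a2 [b2 [Hab2 NRa2 Rb2 _]]] := crossing (P := Reg c2) Cx2 Rx2 (negbT R2).
  have A1 := entA c1 a1 b1 H1 Hab1 Rb1 NRa1; have A2 := entA c2 a2 b2 H2 Hab2 Rb2 NRa2.
  have N : (a1, b1) != (a2, b2).
    apply/negP => /eqP [_ Eb]; subst b2; exact: (disj v c1 c2 b1 H1 H2 N12 Rb1 Rb2).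
  exists (inl [set (a1, b1); (a2, b2)]); rewrite /=; apply/existsP; exists (a1, b1); apply/existsP; exists (a2, b2).
  rewrite A1 A2 N eqxx /=; apply/existsP; exists c1; apply/existsP; exists c2.
  by rewrite H1 H2 N12 Rb1 Rb2.
pose bad := [set v : VT | k < n_of eT lT G v].
pose f := fun v => odflt (inl set0) [pick c | valid v c].
have fvalid : forall v, v \in bad -> valid v (f v).
  move=> v; rewrite inE => /exist_code [c Hc]; rewrite /f; case: pickP => [c' Hc' | H0] //=.
  by move: (H0 c); rewrite Hc.
have finj : {in bad &, injective f}.
  move=> v v' Hv Hv' E; apply: (valid_inj v v' (f v)); first exact: fvalid.
  rewrite E; exact: fvalid.
have Hsub : f @: bad \subset (inl @: [set B : {set VN * VN} | B \subset Add & #|B| == 2]) :|: (inr @: setX Add Add).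
  apply/subsetP => c /imsetP [v Hv ->]; have := fvalid v Hv.
  case: (f v) => [B | [e1 e2]] /=.
  - case/existsP => e1 /existsP [e2 /and5P [A1 A2 N /eqP EB _]]; rewrite inE; apply/orP; left.
    apply/imsetP; exists B => //; rewrite inE EB cards2 N andbT.
    by apply/subsetP => e /set2P [->|->].
  - case/and3P => A1 A2 _; rewrite inE; apply/orP; right; apply/imsetP; exists (e1, e2) => //.
    by rewrite in_setX A1 A2.
have Hb : #|bad| <= 'C(#|Add|, 2) + #|Add| * #|Add|.
  rewrite -(card_in_imset finj); apply: leq_trans (subset_leq_card Hsub) _.
  rewrite cardsU; apply: leq_trans (leq_subr _ _) _.
  apply: leq_add; first by rewrite -(cards_draws Add 2); exact: leq_imset_card.
  rewrite -cardsX; exact: leq_imset_card.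
move: Hb; rewrite Hcard => Hb.
apply: leq_trans (leq_mul (leqnn 2) Hb) _.
rewrite mulnDr bin2 mul2n halfK.
have H1 : h * h.-1 - odd (h * h.-1) <= h * h.
  exact: leq_trans (leq_subr _ _) (leq_mul (leqnn h) (leq_pred h)).
apply: leq_trans (leq_add H1 (leqnn _)) _.
by rewrite mulnn -{1}(mul1n (h ^ 2)) -mulnDl.
Qed.


Definition eN2 (X VT : finType) (eT : rel VT) (lT : X -> VT) (rho : VT) (m : nat) :
    rel (VT + 'I_m)%type :=
  fun u w => match u, w with
  | inl a, inl b => eT a b
  | inl a, inr _ => a == rho
  | inr _, inl b => b \in codom lT
  | inr _, inr _ => false
  end.

Definition F2 (X VT Gn : finType) (lT : X -> VT) (G : X -> {set Gn}) (k m : nat)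
    (z : (VT + 'I_m)%type) : {set Gn} :=
  match z with
  | inl v => if [pick x | lT x == v] is Some x then G x else [set g | enum_rank g %/ k == 0]
  | inr i => [set g | enum_rank g %/ k == i.+1]
  end.

Lemma part_ii (X Gn VT : finType) (eT : rel VT) (lT : X -> VT) (G : X -> {set Gn}) (k : nat) :
  phylo_tree eT lT -> 0 < k -> (forall x, #|G x| <= k) ->
  exists2 h, ell_attainable eT lT G k h & h <= ceil_div (#|Gn| - k) k * (#|X| + 1).
Proof.
case=> rho [[Hr0 Hrc] Hind Hrdeg Hint [Hinj Hl]].
case: k => [//|k'] _ HG.
have HT : treeish eT rho by split.
have Hro : 2 <= outdeg eT rho by move: Hrdeg; rewrite Hr0.
have [x1 [x2 Nx]] := two_leaves HT Hl Hro.
have rho_nl : rho \notin codom lT.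
  by rewrite -Hl -lt0n (leq_trans _ Hro).
set m := ceil_div (#|Gn| - k'.+1) k'.+1.
pose VN := (VT + 'I_m)%type.
pose eN := @eN2 X VT eT lT rho m.
pose lN := fun x => (inl (lT x) : VN).
pose A' := [set a : VN * VN | match a with (inl u, inl w) => eT u w | _ => false end].
pose h := #|[set a : VN * VN | eN a.1 a.2 & a \notin A']|.
have noin : forall u, ~~ eN u (inl rho).
  case=> [a|i] /=; first exact: (no_into_root HT a).
  exact rho_nl.
have lift : forall v, outdeg eT v <= outdeg eN (inl v).
  move=> v; rewrite /outdeg -(card_imset _ (@inl_inj VT 'I_m)); apply: subset_leq_card.
  by apply/subsetP => z /imsetP [w]; rewrite inE => Hw ->; rewrite inE.
have outN_int : forall v, v != rho -> forall w, eN (inl v) w -> exists2 b, w = inl b & eT v b.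
  by move=> v Nv [b|i] /=; [exists b | rewrite (negbTE Nv)].
have outr : forall i, 2 <= outdeg eN (inr i).
  move=> i; apply/card_gt1P; exists (inl (lT x1)), (inl (lT x2)); rewrite !inE /= !codom_f; split => //.
  by apply/negP => /eqP [/Hinj E]; rewrite E eqxx in Nx.
have liftS : forall (S : {set VN}) a b, (forall x y, eT x y -> inl x \in S) -> inl b \in S ->
    connect eT a b -> connect (induced eN S) (inl a) (inl b).
  move=> S a b HS Sb /connectP [s Hs E]; subst b.
  elim: s a Hs Sb => [|y s IH] a /=; first by rewrite connect0.
  case/andP => Hy Hs Sl.
  have Sy : inl y \in S.
    move: Hs Sl; case: s {IH} => [|z s'] /=; first by move=> _ Sl.
    by case/andP => Hz _ _; apply: (HS y z Hz).
  apply: connect_trans (IH y Hs Sl); apply: connect1.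
  by rewrite /induced /= Hy (HS a y Hy) Sy.
exists h.
- exists VN, eN, lN; split.
  + split.
    * exists (inl rho).
        split.
          apply/eqP; rewrite /indeg cards_eq0; apply/eqP/setP => u; rewrite inE in_set0.
          exact: negbTE (noin u).
        case=> [v|i].
          by apply: (conn_map (e := eT) (e' := eN) (f := inl)) => //; apply: Hrc.
        by apply: connect1; rewrite /= eqxx.
      exact: leq_trans Hro (lift rho).
    * pose r := fun z : VN => match z with inl v => (anc eT v).*2 | inr _ => (anc eT rho).*2.+1 end.
      apply: (rank_acyclic (r := r)) => [[a|i] [b|j]] //=.
      - move=> Hab; rewrite ltn_double; exact: anc_lt (connect1 Hab) (tree_acyclic HT Hab).
      - by move=> /eqP ->; rewrite ltnSn.
      - move=> Hb; rewrite ltn_Sdouble; apply: anc_lt (Hrc b) _.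
        apply/negP => Cbr.
        have Nb : b != rho by apply/eqP => E; rewrite E in Hb; rewrite Hb in rho_nl.
        have [q _ Hq] := last_step Cbr Nb.
        by move: (no_into_root HT q); rewrite Hq.
    * case=> [v|i] H1.
      - case: (eqVneq v rho) => [E|Nv].
          by have := leq_trans Hro (lift rho); rewrite -E H1.
        have : 0 < outdeg eN (inl v) by rewrite H1.
        rewrite card_gt0 => /set0Pn [w]; rewrite inE => Hw.
        have [b Eb Hb] := outN_int v Nv w Hw.
        have := Hint v Nv (outdeg_pos Hb); rewrite Hind // add1n ltnS => H2.
        by have := leq_trans H2 (lift v); rewrite H1.
      - by have := outr i; rewrite H1.
    * split; first by move=> a b [/Hinj].
      case=> [v|i].
      - have -> : (inl v \in codom lN) = (v \in codom lT).
          apply/codomP/codomP => [[x [Ex]]|[x Ex]]; exists x; by rewrite ?Ex.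
        case: (eqVneq v rho) => [->|Nv].
          rewrite (negbTE rho_nl); apply/negP => /eqP E.
          by have := leq_trans Hro (lift rho); rewrite E.
        rewrite -Hl; apply/idP/idP => [/eqP E|/eqP E].
          by have := lift v; rewrite E leqn0.
        rewrite cards_eq0; apply/eqP/setP => w; rewrite inE in_set0; apply/negP => Hw.
        have [b _ Hb] := outN_int v Nv w Hw.
        by move: (outdeg_pos Hb); rewrite E.
      - have -> : (inr i \in codom lN) = false by apply/negP => /codomP [x].
        by apply/negP => /eqP E; have := outr i; rewrite E.
  + exists A', inl, (fun _ _ => [::]); split.
    * by split; [exact: inl_inj | ].
    * by move=> [[a|i] [b|j]]; rewrite inE.
    * by move=> u w Huw; split => //=; rewrite /path_arcs /= andbT inE.
    * by [].
    * split => //.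
      move=> [[a|i] [b|j]]; rewrite inE // => Hab; exists a, b; split => //.
      by rewrite /path_arcs /= inE.
  + pose F := @F2 X VT Gn lT G k'.+1 m.
    have Fint : forall v, v \notin codom lT -> F (inl v) = [set g | enum_rank g %/ k'.+1 == 0].
      move=> v Hv; rewrite /F /F2; case: pickP => [y /eqP Ey | //].
      by rewrite -Ey codom_f in Hv.
    have blkcard : forall j, #|[set g : Gn | enum_rank g %/ k'.+1 == j]| <= k'.+1.
      move=> j.
      pose f := fun g : Gn => (Ordinal (ltn_pmod (enum_rank g) (ltn0Sn k')) : 'I_k'.+1).
      rewrite -(card_in_imset (f := f)).
        by apply: leq_trans (max_card _) _; rewrite card_ord.
      move=> g g'; rewrite !inE => /eqP Hg /eqP Hg' [E]; apply: enum_rank_inj; apply: val_inj.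
      change (nat_of_ord (enum_rank g) = nat_of_ord (enum_rank g')).
      by rewrite (divn_eq (enum_rank g) k'.+1) (divn_eq (enum_rank g') k'.+1) Hg Hg' E.
    exists F; split.
    * move=> x; rewrite /F /F2 /lN; case: pickP => [y /eqP /Hinj -> // | H].
      by move: (H x); rewrite eqxx.
    * case=> [v|i] /=; last exact: blkcard.
      by case: pickP => [x _|_]; [exact: HG | exact: blkcard].
    * move=> g; case Hb: (enum_rank g %/ k'.+1) => [|j].
      - exists (inl rho); first by rewrite inE Fint // inE Hb.
        split.
          apply/eqP; rewrite /indeg cards_eq0; apply/eqP/setP => u; rewrite inE in_set0 /induced /=.
          by rewrite (negbTE (noin u)).
        case=> [b|i]; rewrite inE => Hgb.
          apply: liftS (Hrc b) => //; last by rewrite inE.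
          move=> x y Hxy; rewrite inE Fint ?inE ?Hb //.
          by rewrite -Hl -lt0n (outdeg_pos Hxy).
        by move: Hgb; rewrite /F /F2 inE Hb.
      - have Hj : j < m.
          have Hr := ltn_ord (enum_rank g).
          have Hkr : k'.+1 <= enum_rank g by rewrite -(divn_gt0 _ (ltn0Sn k')) Hb.
          have Hkn : k'.+1 <= #|Gn| := leq_trans Hkr (ltnW Hr).
          have E : #|Gn| - k'.+1 + k' = #|Gn|.-1 by rewrite -{2}(subnK Hkn) addnS.
          rewrite /m /ceil_div /= E -Hb; apply: leq_div2r; rewrite -ltnS prednK //.
          exact: leq_ltn_trans (leq0n _) Hr.
        exists (inr (Ordinal Hj)); first by rewrite inE /F /F2 inE Hb.
        split.
          apply/eqP; rewrite /indeg cards_eq0; apply/eqP/setP => [[a|i]]; rewrite inE in_set0 /induced //=.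
          case: (eqVneq a rho) => [->|//] /=.
          by rewrite inE Fint // inE Hb.
        case=> [b|i]; rewrite inE.
          case: (boolP (b \in codom lT)) => [Hbl|Hbn] Hgb.
            apply: connect1; rewrite /induced /= Hbl /=; apply/andP; split; rewrite inE; last exact Hgb.
            by rewrite /F /F2 inE Hb.
          by move: Hgb; rewrite Fint // inE Hb.
        rewrite /F /F2 inE Hb eqSS => /eqP E.
        have -> : i = Ordinal Hj by apply: val_inj.
        exact: connect0.
- pose gc := fun p : 'I_m * option X => match p with
    | (i, None) => ((inl rho, inr i) : VN * VN)
    | (i, Some x) => (inr i, inl (lT x)) end.
  apply: (@leq_trans #|gc @: [set: 'I_m * option X]|).
    apply: subset_leq_card; apply/subsetP => [[[a|i] [b|j]]]; rewrite inE /= => // /andP [He Hn].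
    + by rewrite inE He in Hn.
    + by apply/imsetP; exists (j, None); rewrite ?in_setT // (eqP He).
    + by case/codomP: He => x ->; apply/imsetP; exists (i, Some x); rewrite ?in_setT.

  apply: leq_trans (leq_imset_card _ _) _.
  by rewrite cardsT card_prod card_ord card_option addn1.
Qed.

Unset Implicit Arguments.

Theorem theorem1 (X Gn VT : finType) (eT : rel VT) (lT : X -> VT)
    (G : X -> {set Gn}) (k : nat) :
  phylo_tree eT lT -> 0 < k -> (forall x, #|G x| <= k) ->
  (* (i): every attainable h, in particular ell(T,G,k), satisfies
     h >= sqrt(2/3 * #{v | n(v) > k}), i.e. 2 * #{...} <= 3 * h^2 *)
  (forall h, ell_attainable eT lT G k h ->
     2 * #|[set v : VT | k < n_of eT lT G v]| <= 3 * h ^ 2) /\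
  (* (ii): some h <= ceil((|Genes| - k)/k) * (|X| + 1) is attainable *)
  (exists2 h, ell_attainable eT lT G k h &
     h <= ceil_div (#|Gn| - k) k * (#|X| + 1)).
Proof.
move=> HT Hk HG; split; last exact: (part_ii HT Hk HG).
case: HT => rho [[Hr0 Hrc] Hind _ _ [Hinj Hl]].
have HTr : treeish eT rho by split.
exact: (part_i HTr Hl Hinj).
Qed.
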